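(* Let $A\in {\operatorname{\mathsf{TPD}}}_n(\mathbb{S}_{\max}^\vee)$, and set $\gamma_{i}=a_{ii}$ for $i\in [n]$. Assume that $\gamma_{1}\succeq \gamma_{2} \succeq \cdots \succeq \gamma_{n}$, and define $B_k=\gamma_k I\ominus A$ for some $k \in [n]$. Then, all the diagonal entries of $(B_k)^{\mathrm{adj}}$ are non-zero and they are all in $\mathbb{S}_{\max}^\circ$ except possibly the $k$-th diagonal entry, which is also in $\mathbb{S}_{\max}^\circ$ if and only if $\gamma_k$ is not a simple $\mathbb{S}_{\max}$-eigenvalue.
   Context: $\mathbb{S}_{\max}$ is the symmetrized tropical semiring over a divisible totally ordered abelian group, with zero $\mathbf{0}$, unit $\mathbf{1}$, minus $\ominus$; $\mathbb{S}_{\max}^\vee$ is the set of signed elements and $\mathbb{S}_{\max}^\circ$ the set of balanced elements ($c\ominus c$). $a\preceq b$ iff $b=a\oplus b$. $A\in{\operatorname{\mathsf{TPD}}}_n(\mathbb{S}_{\max}^\vee)$: $A$ symmetric with signed entries, $\mathbf{0}<a_{ii}$ and $a_{ij}^2<a_{ii}a_{jj}$ for $i\ne j$ (where $a<b$ iff $b\ominus a$ is positive). $(M^{\mathrm{adj}})_{ij}=(\ominus\mathbf{1})^{i+j}\det M[\hat j,\hat i]$ with the signed determinant. The $\mathbb{S}_{\max}$-eigenvalues of $A$ are its diagonal entries, counted with multiplicity; $\gamma_k$ is simple iff it occurs once, i.e. $\gamma_{k-1}\succ\gamma_k\succ\gamma_{k+1}$ (convention $\gamma_{n+1}=\mathbf{0}$,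 and $a\succ b$ means $b\preceq a$, $a\ne b$). *)

(* Defs.v *)
From HB Require Import structures.
From mathcomp Require Import all_boot all_order all_algebra all_fingroup.
Set Implicit Arguments. Unset Strict Implicit. Unset Printing Implicit Defensive.
Import Order.TTheory GRing.Theory Num.Theory.
Local Open Scope ring_scope.

Definition divisible_toag (G : porderZmodType) : Prop :=
  [/\ (forall x y : G, (x <= y) || (y <= x)),
      (forall x y z : G, x <= y -> x + z <= y + z) &
      (forall (x : G) (m : nat), (0 < m)%N -> exists y : G, y *+ m = x)].

Inductive ssign := Spos | Sneg | Sbal.

Definition ssign_eqb (s t : ssign) : bool :=
  match s, t with
  | Spos, Spos | Sneg, Sneg | Sbal, Sbal => true
  | _, _ => false end.

Definition ssign_mul (s t : ssign) : ssign :=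
  match s, t with
  | Sbal, _ | _, Sbal => Sbal
  | Spos, Spos | Sneg, Sneg => Spos
  | _, _ => Sneg end.

Definition ssign_opp (s : ssign) : ssign :=
  match s with Spos => Sneg | Sneg => Spos | Sbal => Sbal end.

Section Smax.
Variable G : porderZmodType.

(* SZero = the tropical zero (-oo); SElt Spos a = a, SElt Sneg a = (-) a,
   SElt Sbal a = a^o (balanced), with modulus a in G. *)
Inductive smax := SZero | SElt of ssign & G.

Definition sadd (x y : smax) : smax :=
  match x, y with
  | SZero, _ => y
  | _, SZero => x
  | SElt s a, SElt t b =>
      if a < b then y else if b < a then x
      else if ssign_eqb s t then x else SElt Sbal a
  end.

Definition smul (x y : smax) : smax :=
  match x, y with
  | SElt s a, SElt t b => SElt (ssign_mul s t) (a + b)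
  | _, _ => SZero end.

Definition sopp (x : smax) : smax :=
  match x with SZero => SZero | SElt s a => SElt (ssign_opp s) a end.

Definition sone : smax := SElt Spos 0.

Definition ssub (x y : smax) : smax := sadd x (sopp y).

Definition spow (x : smax) (m : nat) : smax := iter m (smul x) sone.

Definition spositive (x : smax) : Prop := exists a, x = SElt Spos a.

Definition slt (x y : smax) : Prop := spositive (ssub y x).

Definition spreceq (x y : smax) : Prop := y = sadd x y.

Definition ssigned (x : smax) : Prop := x = SZero \/ exists a, x = SElt Spos a \/ x = SElt Sneg a.

Definition sbalanced (x : smax) : Prop := exists c, x = ssub c c.

Definition sdet (n : nat) (M : 'M[smax]_n) : smax :=
  \big[sadd/SZero]_(s : 'S_n)
     smul (if odd_perm s then sopp sone else sone)
          (\big[smul/sone]_(i < n) M i (s i)).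

Definition sadj (n : nat) (M : 'M[smax]_n) : 'M[smax]_n :=
  \matrix_(i < n, j < n)
     smul (spow (sopp sone) (i + j)) (sdet (row' j (col' i M))).

Definition sTPD (n : nat) (A : 'M[smax]_n) : Prop :=
  [/\ forall i j, A i j = A j i,
      forall i j, ssigned (A i j),
      forall i, slt SZero (A i i) &
      forall i j, i != j -> slt (smul (A i j) (A i j)) (smul (A i i) (A j j))].

Definition sshift (n : nat) (g : smax) (A : 'M[smax]_n) : 'M[smax]_n :=
  \matrix_(i < n, j < n) ssub (if i == j then g else SZero) (A i j).

(* gamma_k = a_kk is a simple S_max-eigenvalue: it occurs once among the
   diagonal entries (the eigenvalues counted with multiplicity). *)
Definition ssimple_eig (n : nat) (A : 'M[smax]_n) (k : 'I_n) : Prop :=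
  forall i, A i i = A k k -> i = k.

End Smax.
Arguments SZero {G}.

(* Main.v *)
Require Import Defs.
From mathcomp Require Import all_boot all_order all_algebra all_fingroup.
Set Implicit Arguments. Unset Strict Implicit. Unset Printing Implicit Defensive.
Import Order.TTheory GRing.Theory Num.Theory.
Local Open Scope ring_scope.

Section Aux.
Variable G : porderZmodType.
Hypothesis HG : divisible_toag G.

Definition smod (x : smax G) : G := if x is SElt _ a then a else 0.
Definition ssgn (x : smax G) : ssign := if x is SElt s _ then s else Spos.
Definition snz (x : smax G) : bool := if x is SElt _ _ then true else false.
Definition Dom (a : G) (x : smax G) : Prop :=
  x = SZero \/ exists t b, x = SElt t b /\ b < a.

Lemma tot (x y : G) : (x <= y) || (y <= x).
Proof. by case: HG. Qed.
Lemma lerD2r (x y z : G) : x <= y -> x + z <= y + z.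
Proof. by case: HG => _ h _; apply: h. Qed.
Lemma lerD' (x y z w : G) : x <= y -> z <= w -> x + z <= y + w.
Proof.
move=> h1 h2; apply: le_trans (lerD2r z h1) _.
rewrite (addrC y) (addrC y); exact: lerD2r.
Qed.
Lemma ltrD2r (x y z : G) : x < y -> x + z < y + z.
Proof.
rewrite !lt_neqAle => /andP[h1 h2]; rewrite lerD2r // andbT.
apply: contra h1 => /eqP h; apply/eqP; exact: (addIr z).
Qed.
Lemma ltr_leD' (x y z w : G) : x < y -> z <= w -> x + z < y + w.
Proof.
move=> h1 h2; apply: lt_le_trans (ltrD2r z h1) _.
rewrite (addrC y) (addrC y); exact: lerD2r.
Qed.
Lemma eq_of_nlt (x y : G) : ~~ (x < y) -> ~~ (y < x) -> x = y.
Proof.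
move=> h1 h2; case/orP: (tot x y) => h.
  by move: h1; rewrite lt_neqAle h andbT negbK => /eqP.
by move: h2; rewrite lt_neqAle h andbT negbK => /eqP.
Qed.
Lemma half_lt (x y : G) : x + x < y + y -> x < y.
Proof.
move=> h; case/orP: (tot x y) => h'.
  rewrite lt_neqAle h' andbT; apply/eqP => e; by rewrite e ltxx in h.
by have := lerD' h' h'; rewrite (lt_geF h).
Qed.

Lemma ler_sum' (I : Type) (r : seq I) (P : pred I) (f g : I -> G) :
  (forall j, f j <= g j) -> \sum_(j <- r | P j) f j <= \sum_(j <- r | P j) g j.
Proof.
move=> h; apply: (big_ind2 (fun x y => x <= y)) => //.
by move=> *; exact: lerD'.
Qed.

Lemma ltr_sum' (m : nat) (f g : 'I_m -> G) j0 :
  (forall j, f j <= g j) -> f j0 < g j0 -> \sum_j f j < \sum_j g j.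
Proof.
move=> h h0; rewrite (bigD1 j0) //= [X in _ < X](bigD1 j0) //=.
by apply: ltr_leD' h0 _; apply: ler_sum'.
Qed.

Lemma saddx0 (x : smax G) : sadd x SZero = x. Proof. by case: x. Qed.
Lemma smulx0 (x : smax G) : smul x SZero = SZero. Proof. by case: x. Qed.
Lemma smul1x (x : smax G) : smul (sone G) x = x.
Proof. by case: x => // s a; rewrite /smul /sone add0r; case: s. Qed.

Lemma sadd_TD s a y : Dom a y -> sadd (SElt s a) y = SElt s a.
Proof. by case=> [->//|[t [b [-> hb]]]] /=; rewrite (lt_gtF hb) hb. Qed.
Lemma sadd_DT s a y : Dom a y -> sadd y (SElt s a) = SElt s a.
Proof. by case=> [->//|[t [b [-> hb]]]] /=; rewrite hb. Qed.
Lemma sadd_TT s (a : G) : sadd (SElt s a) (SElt s a) = SElt s a.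
Proof. by rewrite /= ltxx; case: s. Qed.
Lemma sadd_DD a x y : Dom a x -> Dom a y -> Dom a (sadd x y).
Proof.
case=> [->//|[t [b [-> hb]]]]; case=> [->|[t' [b' [-> hb']]]]; first by right; exists t, b.
rewrite /=; case: ifP => _; first by right; exists t', b'.
case: ifP => _; first by right; exists t, b.
by case: ifP => _; right; [exists t, b | exists Sbal, b].
Qed.

Lemma bigsadd_dom (I : eqType) (r : seq I) (F : I -> smax G) i0 s a :
  F i0 = SElt s a -> (forall i, i != i0 -> Dom a (F i)) ->
  (i0 \in r -> \big[@sadd G/SZero]_(i <- r) F i = SElt s a) /\
  (i0 \notin r -> Dom a (\big[@sadd G/SZero]_(i <- r) F i)).
Proof.
move=> h0 hd; elim: r => [|x r [IH1 IH2]]; first by rewrite big_nil; split=> //; left.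
rewrite big_cons in_cons; case: (eqVneq i0 x) => [<-|hx] /=.
  split=> // _; rewrite h0; case: (boolP (i0 \in r)) => h.
    by rewrite IH1 //; exact: sadd_TT.
  exact: sadd_TD (IH2 h).
have hF : Dom a (F x) by apply: hd; rewrite eq_sym.
split=> h; first by rewrite IH1 //; exact: sadd_DT.
exact: sadd_DD hF (IH2 h).
Qed.

Lemma bigsmul_nz (I : Type) (r : seq I) (F : I -> smax G) :
  all (fun i => snz (F i)) r ->
  \big[@smul G/sone G]_(i <- r) F i =
  SElt (\big[ssign_mul/Spos]_(i <- r) ssgn (F i)) (\sum_(i <- r) smod (F i)).
Proof.
elim: r => [|x r IH]; first by rewrite !big_nil.
rewrite /= !big_cons => /andP[hx hr]; rewrite IH //.
by case: (F x) hx.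
Qed.

Lemma bigsmul_z (I : Type) (r : seq I) (F : I -> smax G) :
  ~~ all (fun i => snz (F i)) r -> \big[@smul G/sone G]_(i <- r) F i = SZero.
Proof.
elim: r => [|x r IH] //=; rewrite big_cons negb_and; case/orP.
  by case: (F x).
by move/IH->; exact: smulx0.
Qed.

Lemma smul_bal (a b : ssign) : ssign_mul a b = Sbal <-> a = Sbal \/ b = Sbal.
Proof. case: a; case: b; split=> //= h; first [by left | by right | by case: h]. Qed.

Lemma bigsign_bal (I : eqType) (r : seq I) (f : I -> ssign) :
  \big[ssign_mul/Spos]_(i <- r) f i = Sbal <-> exists2 i, i \in r & f i = Sbal.
Proof.
elim: r => [|x r IH]; first by rewrite big_nil; split=> //; case.
rewrite big_cons; split.
  move/smul_bal=> [h|/IH[i hi h]]; first by exists x; rewrite ?mem_head.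
  by exists i; rewrite // in_cons hi orbT.
move=> [i]; rewrite in_cons => /orP[/eqP -> h|hi h]; apply/smul_bal; first by left.
by right; apply/IH; exists i.
Qed.

Lemma sbal_iff s (v : G) : sbalanced (SElt s v) <-> s = Sbal.
Proof.
split.
  case=> [[|t a]] //=; rewrite ltxx; case: t => /=; by case.
by move=> ->; exists (SElt Spos v); rewrite /ssub /= ltxx.
Qed.

Lemma spow_even (p : nat) : spow (sopp (sone G)) (p + p) = sone G.
Proof.
rewrite addnn; elim: p => [|p IH] //.
by rewrite doubleS /spow !iterS -/(spow _ _) IH /= !addr0.
Qed.

Lemma diag_prop (c d : G) :
  let x := sadd (SElt Spos c) (SElt Sneg d) in
  [/\ snz x, d <= smod x & (ssgn x = Sbal <-> d = c)].
Proof.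
rewrite /=; case: ifP => h1; [|case: ifP => h2] => /=.
- split=> //; split=> // e; by rewrite e ltxx in h1.
- split=> //; first exact: ltW. split=> // e; by rewrite e ltxx in h2.
- have e := eq_of_nlt (negbT h1) (negbT h2); rewrite e; split=> //.
Qed.

End Aux.

Lemma bigsadd_T (G : porderZmodType) (I : eqType) (r : seq I) (F : I -> smax G) i0 s a :
  i0 \in r -> F i0 = SElt s a -> (forall i, i != i0 -> Dom a (F i)) ->
  \big[@sadd G/SZero]_(i <- r) F i = SElt s a.
Proof. by move=> h h0 hd; have [h1 _] := bigsadd_dom r h0 hd; exact: h1. Qed.

Theorem proposition5p1 (G : porderZmodType) (HG : divisible_toag G)
  (n : nat) (A : 'M[smax G]_n) (k : 'I_n) :
  sTPD A ->
  (forall i j : 'I_n, nat_of_ord j = (nat_of_ord i).+1 -> spreceq (A j j) (A i i)) ->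
  let B := sshift (A k k) A in
  (forall i, sadj B i i <> SZero) /\
  (forall i, i != k -> sbalanced (sadj B i i)) /\
  (sbalanced (sadj B k k) <-> ~ ssimple_eig A k).
Proof.
move=> [Hsym Hsgn Hpos Hoff] _ B.
set g := fun l => smod (A l l).
have hd l : A l l = SElt Spos (g l).
  by rewrite /g; move: (Hpos l); rewrite /slt /ssub /spositive saddx0 => -[a ->].
have Boff l l' : l != l' -> B l l' = sopp (A l l').
  by move=> h; rewrite /B /sshift mxE (negbTE h).
have Bdiag l : B l l = sadd (SElt Spos (g k)) (SElt Sneg (g l)).
  by rewrite /B /sshift mxE eqxx /ssub hd (hd l).
have Hb l l' : l != l' -> snz (A l l') -> smod (A l l') + smod (A l l') < g l + g l'.
  move=> hne; have := Hoff l l' hne; rewrite (hd l) (hd l').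
  case: (Hsgn l l') => [->|[b [->|->]]]; first by [].
    rewrite /slt /ssub /spositive /= => + _; case: ifP => [_ [? //]|_]; case: ifP => //= _ [? //].
  rewrite /slt /ssub /spositive /= => + _; case: ifP => [_ [? //]|_]; case: ifP => //= _ [? //].
have key i : exists s, sadj B i i = SElt s (\sum_j smod (row' i (col' i B) j j)) /\
   (s = Sbal <-> exists j, g (lift i j) = g k).
  set M := row' i (col' i B).
  have Mdiag j : M j j = B (lift i j) (lift i j) by rewrite !mxE.
  have Moff j l : j != l -> M j l = sopp (A (lift i j) (lift i l)).
    move=> h; rewrite !mxE (inj_eq (@lift_inj _ i)) (negbTE h) //.
  have Mnz j : snz (M j j) by rewrite Mdiag Bdiag; case: (diag_prop HG (g k) (g (lift i j))).
  exists (\big[ssign_mul/Spos]_j ssgn (M j j)); split.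
    rewrite mxE spow_even smul1x.
    rewrite /sdet; apply: (bigsadd_T (i0 := 1%g)); first exact: mem_index_enum.
      rewrite odd_perm1 smul1x bigsmul_nz; last by apply/allP => j _; rewrite perm1.
      by under eq_bigr do rewrite perm1; under [X in SElt _ X]eq_bigr do rewrite perm1.
    move=> s hs.
    have [Hall|Hnall] := boolP (all (fun j => snz (M j (s j))) (index_enum 'I_n.-1)); last first.
      by left; rewrite bigsmul_z // smulx0.
    rewrite bigsmul_nz //; right.
    set v := (\sum_(i0 <- _) _).
    have [t ->] : exists t, smul (if odd_perm s then sopp (sone G) else sone G) (SElt (\big[ssign_mul/Spos]_(i0 <- index_enum 'I_n.-1) ssgn (M i0 (s i0))) v) = SElt t (0 + v).
      by case: (odd_perm s); eexists.
    exists t, (0 + v); split=> //; rewrite add0r /v; apply: (half_lt HG).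
    have [j0 hj0|hall] := pickP (fun j => s j != j); last first.
      by case/eqP: hs; apply/permP => j; rewrite perm1; apply/eqP; move/negbFE: (hall j).
    have -> : \sum_j smod (M j j) + \sum_j smod (M j j) =
              \sum_j (smod (M j j) + smod (M (s j) (s j))).
      by rewrite big_split /= [X in _ + X = _](reindex_inj (@perm_inj _ s)).
    rewrite -big_split /=.
    have hle j : smod (M j (s j)) + smod (M j (s j)) <= smod (M j j) + smod (M (s j) (s j))
            /\ (s j != j -> smod (M j (s j)) + smod (M j (s j)) < smod (M j j) + smod (M (s j) (s j))).
      have hnz : snz (M j (s j)) by move/allP: Hall; apply; exact: mem_index_enum.
      have [e|ne] := eqVneq (s j) j; first by rewrite e; split=> //; exact: lexx.
      have hlt : smod (M j (s j)) + smod (M j (s j)) < smod (M j j) + smod (M (s j) (s j)).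
        rewrite Moff; last by rewrite eq_sym.
        rewrite Moff in hnz; last by rewrite eq_sym.
        have hnz' : snz (A (lift i j) (lift i (s j))) by move: hnz; case: (A _ _).
        have -> : smod (sopp (A (lift i j) (lift i (s j)))) = smod (A (lift i j) (lift i (s j))) by case: (A _ _).
        apply: lt_le_trans (Hb _ _ _ hnz') _; first by rewrite (inj_eq (@lift_inj _ i)) eq_sym.
        rewrite !Mdiag !Bdiag; apply: (lerD' HG).
          by case: (diag_prop HG (g k) (g (lift i j))).
        by case: (diag_prop HG (g k) (g (lift i (s j)))).
      by split; [exact: ltW hlt | move=> _; exact: hlt].
    apply: (ltr_sum' HG (j0 := j0)); first by move=> j; case: (hle j).
    by case: (hle j0) => _; apply.
  split.
    move/bigsign_bal=> [j _]; rewrite Mdiag Bdiag => h; exists j.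
    by case: (diag_prop HG (g k) (g (lift i j))) => _ _ [+ _]; apply.
  move=> [j hj]; apply/bigsign_bal; exists j; first exact: mem_index_enum.
  by rewrite Mdiag Bdiag; case: (diag_prop HG (g k) (g (lift i j))) => _ _ [_]; apply.
split; first by move=> i; case: (key i) => s [-> _].
split.
  move=> i hik; case: (key i) => s [-> [_ hs]]; apply/sbal_iff; apply: hs.
  case: (unliftP i k) hik => [j ->|->]; last by rewrite eqxx.
  by exists j.
case: (key k) => s [-> hs]; split.
  move/sbal_iff/hs=> [j hj] hsimp; have := hsimp (lift k j); rewrite !hd hj => /(_ erefl) e.
  by move: (neq_lift k j); rewrite e eqxx.
move=> hns; apply/sbal_iff; apply/hs.
have [l /andP[h1 h2]|hn] := pickP (fun l => (g l == g k) && (l != k)).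
  case: (unliftP k l) h1 h2 => [j ->|->]; last by move=> _; rewrite eqxx.
  by move=> h1 _; exists j; apply/eqP.
case: hns => l; rewrite !hd => -[e]; move: (hn l); rewrite e eqxx /=.
by move/negbFE/eqP.
Qed.
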